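(* Let $k\ge2$, let $A=\{a_1,\dots,a_n\}$ be a sorted multiset of positive integers ($a_1\le\dots\le a_n$), and let $p$ be an integer with $1\le p\le n-k+1$. Let $Q=\sum_{i=1}^pa_i$ and $q=\max\{i: a_i\le Q\}$. Then the $k$-SSR$_R$ instance $(A,p)$ has an optimal solution $(S_1,\dots,S_k)$ satisfying: (1) every set $S_i$ containing only elements $j$ with $a_j\le Q$ satisfies $\Sigma(S_i,A)<2Q$; (2) every set $S_i$ containing an element $j$ with $a_j>Q$ is a singleton; (3) if $x\ge0$ denotes the number of singleton sets $\{j\}$ in the solution with $a_j>Q$, then the union of these singleton sets is $\{q+1,q+2,\dots,q+x\}$.
   Context: $[n]=\{1,\dots,n\}$; ''elements'' of sets are indices in $[n]$. For $S\subseteq[n]$, $\Sigma(S,A)=\sum_{i\in S}a_i$. For pairwise disjoint $S_1,\dots,S_k\subseteq[n]$, $\mathcal{R}(S_1,\dots,S_k,A)=\max_i\Sigma(S_i,A)/\min_i\Sigma(S_i,A)$ if the minimum is positive and $+\infty$ otherwise. The $k$-SSR$_R$ problem: given sorted $A$ and integer $p$ with $1\le p\le n-k+1$, find pairwise disjoint $S_1,\dots,S_k\subseteq[n]$ with $\max(S_1)=p$ and $\max(S_i)>p$ for $1<i\le k$ minimizing $\mathcal{R}(S_1,\dots,S_k,A)$; an optimal solution is a feasible one of minimum ratio. *)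

(* Defs.v *)
(* Indices of [n] are elements of 'I_n.+1 different from 0;
   the multiset A is a function nat -> nat, a_i = A i for 1 <= i <= n. *)
From HB Require Import structures.
From mathcomp Require Import all_boot all_order all_algebra.
Set Implicit Arguments. Unset Strict Implicit. Unset Printing Implicit Defensive.
Import Order.TTheory GRing.Theory Num.Theory.

Definition Sigma n (S : {set 'I_n.+1}) (A : nat -> nat) : nat :=
  \sum_(i in S) A i.

(* max(S) (only used on nonempty sets; 0 on the empty set) *)
Definition maxS n (S : {set 'I_n.+1}) : nat := \max_(i in S) (i : nat).

Definition maxsum n k (S : 'I_k -> {set 'I_n.+1}) A : nat :=
  \max_(i < k) Sigma (S i) A.
Definition minsum n k (S : 'I_k -> {set 'I_n.+1}) A : nat :=
  \big[minn/maxsum S A]_(i < k) Sigma (S i) A.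

(* R(S_1,...,S_k, A); None encodes +infinity *)
Definition ratio n k (S : 'I_k -> {set 'I_n.+1}) A : option rat :=
  if 0 < minsum S A then Some ((maxsum S A)%:R / (minsum S A)%:R)%R else None.

Definition ratio_le (r1 r2 : option rat) : bool :=
  match r1, r2 with
  | _, None => true
  | None, Some _ => false
  | Some a, Some b => (a <= b)%R
  end.

(* feasibility for k-SSR_R instance (A, p); S_1 is the set with index 0 *)
Definition feasible n k (A : nat -> nat) (p : nat) (S : 'I_k -> {set 'I_n.+1}) : Prop :=
  (forall i, (ord0 : 'I_n.+1) \notin S i) /\
  (forall i j, i != j -> [disjoint S i & S j]) /\
  (forall i : 'I_k, val i = 0 -> maxS (S i) = p) /\
  (forall i : 'I_k, val i <> 0 -> p < maxS (S i)).

Definition optimal n k A p (S : 'I_k -> {set 'I_n.+1}) : Prop :=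
  feasible A p S /\
  forall T : 'I_k -> {set 'I_n.+1}, feasible A p T -> ratio_le (ratio S A) (ratio T A).

(* Main.v *)
From Pilot Require Import Defs.
From HB Require Import structures.
From mathcomp Require Import all_boot all_order all_algebra.
From mathcomp Require Import zify.
Set Implicit Arguments. Unset Strict Implicit. Unset Printing Implicit Defensive.
Import Order.TTheory GRing.Theory Num.Theory.
Import Pilot.Defs.

Lemma sigma_le_maxsum n k (S : 'I_k -> {set 'I_n.+1}) A i :
  Sigma (S i) A <= maxsum S A.
Proof. by rewrite /maxsum; apply: (@bigop.leq_bigmax _ (fun j => Sigma (S j) A) i). Qed.

Lemma minsum_le n k (S : 'I_k -> {set 'I_n.+1}) A i :
  minsum S A <= Sigma (S i) A.
Proof.
rewrite /minsum.
have : i \in index_enum 'I_k by rewrite mem_index_enum.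
elim: (index_enum 'I_k) => [//|j r IH]; rewrite inE big_cons.
case/orP => [/eqP<-|/IH h]; first exact: geq_minl.
exact: leq_trans (geq_minr _ _) h.
Qed.

Lemma minsum_ge n k (S : 'I_k -> {set 'I_n.+1}) A c :
  c <= maxsum S A -> (forall i, c <= Sigma (S i) A) -> c <= minsum S A.
Proof.
move=> h1 h2; rewrite /minsum; apply: (big_ind (fun x => c <= x)) => //.
by move=> x y hx hy; rewrite leq_min hx hy.
Qed.

Lemma maxsum_le n k (S : 'I_k -> {set 'I_n.+1}) A c :
  (forall i, Sigma (S i) A <= c) -> maxsum S A <= c.
Proof. by move=> h; apply/bigop.bigmax_leqP => i _; apply: h. Qed.

Lemma ratio_le_trans a b c : ratio_le a b -> ratio_le b c -> ratio_le a c.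
Proof.
case: a => [a|]; case: b => [b|]; case: c => [c|] //=.
exact: le_trans.
Qed.

Lemma ratio_le_total a b : ratio_le a b || ratio_le b a.
Proof. case: a => [a|]; case: b => [b|] //=; exact: le_total. Qed.

Lemma ratio_cmp n k (S S' : 'I_k -> {set 'I_n.+1}) A :
  0 < k -> 0 < minsum S A ->
  (forall i, minsum S A <= Sigma (S' i) A <= maxsum S A) ->
  ratio_le (ratio S' A) (ratio S A).
Proof.
move=> k0 m0 h.
have hM : maxsum S' A <= maxsum S A by apply: maxsum_le => i; case/andP: (h i).
have hm : minsum S A <= minsum S' A.
  apply: minsum_ge => [|i]; last by case/andP: (h i).
  apply: leq_trans (sigma_le_maxsum S' A (Ordinal k0)).
  by case/andP: (h (Ordinal k0)).
rewrite /ratio m0 (leq_trans m0 hm) /=.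
have hm0 : (0 < (minsum S A)%:R :> rat)%R by rewrite ltr0n.
have hm0' : (0 < (minsum S' A)%:R :> rat)%R by rewrite ltr0n (leq_trans m0 hm).
rewrite ler_pdivrMr // mulrAC ler_pdivlMr //.
apply: ler_pM; rewrite ?ler0n ?ler_nat //.
Qed.

Lemma maxS1 n (x : 'I_n.+1) : maxS [set x] = x.
Proof. by rewrite /maxS big_set1. Qed.

Lemma le_maxS n (X : {set 'I_n.+1}) j : j \in X -> (j : nat) <= maxS X.
Proof. by move=> hj; rewrite /maxS; apply: (@bigop.leq_bigmax_cond _ (mem X) (fun i => val i) j). Qed.

Lemma maxS_att n (X : {set 'I_n.+1}) : 0 < maxS X -> exists2 m, m \in X & val m = maxS X.
Proof.
move=> h; have : 0 < #|X|.
  rewrite card_gt0; apply/negP => /eqP X0; move: h; by rewrite /maxS X0 big_set0.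
move=> /(@eq_bigmax_cond _ (mem X) (fun i => val i)) [m hm e].
by exists m => //; rewrite /maxS e.
Qed.

Lemma maxS_sub n (X Y : {set 'I_n.+1}) m :
  X \subset Y -> m \in X -> val m = maxS Y -> maxS X = maxS Y.
Proof.
move=> sXY mX e; apply/eqP; rewrite eqn_leq; apply/andP; split.
  rewrite /maxS; apply/bigop.bigmax_leqP => i iX; apply: le_maxS.
  exact: (subsetP sXY).
by rewrite -e le_maxS.
Qed.

Lemma Q_ord n (A : nat -> nat) p : p <= n ->
  \sum_(1 <= i < p.+1) A i = \sum_(i < n.+1 | (i < p.+1) && (1 <= i)) A i.
Proof.
move=> pn; rewrite (@big_nat_widen _ _ _ 1 p.+1 n.+1) //.
by rewrite big_geq_mkord.
Qed.

Lemma sigma_le_Q n (X : {set 'I_n.+1}) (A : nat -> nat) p : p <= n ->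
  (forall j, j \in X -> 1 <= j <= p) -> Sigma X A <= \sum_(1 <= i < p.+1) A i.
Proof.
move=> pn h; rewrite (@Q_ord n) // /Sigma big_mkcond [X in _ <= X]big_mkcond /=.
apply: leq_sum => i _; case: ifP => // /h /andP[h1 h2].
by rewrite ltnS h2 h1.
Qed.

Definition upd n k (S : 'I_k -> {set 'I_n.+1}) i0 X : 'I_k -> {set 'I_n.+1} :=
  fun i => if i == i0 then X else S i.

Definition pot n k (S : 'I_k -> {set 'I_n.+1}) := \sum_(i < k) \sum_(j in S i) (val j).

Lemma pot_upd n k (S : 'I_k -> {set 'I_n.+1}) i0 (Y : {set 'I_n.+1}) :
  \sum_(j in Y) (val j) < \sum_(j in S i0) (val j) -> pot (upd S i0 Y) < pot S.
Proof.
move=> h; rewrite /pot (bigD1 i0) //= [Z in _ < Z](bigD1 i0) //= /upd eqxx.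
rewrite (eq_bigr (fun i => \sum_(j in S i) val j)); last by move=> i /negbTE ->.
by rewrite ltn_add2r.
Qed.

Lemma sigma_pos n (X : {set 'I_n.+1}) (A : nat -> nat) :
  (forall i, 1 <= i <= n -> 0 < A i) -> ord0 \notin X -> 0 < maxS X -> 0 < Sigma X A.
Proof.
move=> Apos h0 /maxS_att [m mX _].
rewrite /Sigma (bigD1 m) //= ltn_addr // Apos //.
have : m != ord0 by apply: contraNneq h0 => <-.
rewrite -(inj_eq val_inj) /= lt0n => ->; by rewrite -ltnS ltn_ord.
Qed.

Lemma feas_sigma_pos n k (A : nat -> nat) p (S : 'I_k -> {set 'I_n.+1}) :
  (forall i, 1 <= i <= n -> 0 < A i) -> 1 <= p -> feasible A p S ->
  forall i, 0 < Sigma (S i) A.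
Proof.
move=> Apos p1 [h0 [_ [h1 h2]]] i; apply: sigma_pos => //.
case: ((i : nat) =P 0) => [e|ne]; first by rewrite h1.
exact: leq_ltn_trans (leq0n p) (h2 i ne).
Qed.

Lemma feas_minsum_pos n k (A : nat -> nat) p (S : 'I_k -> {set 'I_n.+1}) :
  0 < k -> (forall i, 1 <= i <= n -> 0 < A i) -> 1 <= p -> feasible A p S ->
  0 < minsum S A.
Proof.
move=> k0 Apos p1 F; apply: minsum_ge => [|i]; last exact: (feas_sigma_pos Apos p1 F).
apply: leq_trans (feas_sigma_pos Apos p1 F (Ordinal k0)) _.
by apply: (@bigop.leq_bigmax _ (fun j => Sigma (S j) A) (Ordinal k0)).
Qed.

Lemma upd_feasible n k (A : nat -> nat) p (S : 'I_k -> {set 'I_n.+1}) (i0 : 'I_k) (X : {set 'I_n.+1}) :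
  feasible A p S -> ord0 \notin X ->
  (forall i, i != i0 -> [disjoint X & S i]) ->
  (val i0 = 0 -> maxS X = p) -> (val i0 <> 0 -> p < maxS X) ->
  feasible A p (upd S i0 X).
Proof.
move=> [h0 [hd [h1 h2]]] X0 Xd m1 m2; rewrite /upd; split; last split; last split.
- by move=> i; case: eqP.
- move=> i j ij; case: (eqVneq i i0) => [ei|ne1]; case: (eqVneq j i0) => [ej|ne2].
  + by move: ij; rewrite ei ej eqxx.
  + by subst i; apply: Xd; rewrite eq_sym.
  + by rewrite disjoint_sym; apply: Xd.
  + exact: hd.
- by move=> i; case: eqP => [->|_]; [apply: m1 | apply: h1].
- by move=> i; case: eqP => [->|_]; [apply: m2 | apply: h2].
Qed.
From Stdlib Require Import Classical FunctionalExtensionality.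

Lemma ratio_le_refl a : ratio_le a a.
Proof. by case: a => //= a; exact: lexx. Qed.

Lemma exists_min_list (T : eqType) (P : T -> Prop) (r : T -> option rat) (l : seq T) :
  (exists2 x, x \in l & P x) ->
  exists x, P x /\ forall y, y \in l -> P y -> ratio_le (r x) (r y).
Proof.
elim: l => [[x //]|a l IH] H.
case: (classic (exists2 x, x \in l & P x)) => [/IH [x0 [Px0 hx0]]|N].
  case: (classic (P a)) => Pa.
    case/orP: (ratio_le_total (r a) (r x0)) => c.
      exists a; split => // y; rewrite inE => /orP [/eqP -> _|yl Py].
        exact: ratio_le_refl.
      exact: ratio_le_trans c (hx0 y yl Py).
    exists x0; split => // y; rewrite inE => /orP [/eqP -> _|yl Py] //.
    exact: hx0.
  exists x0; split => // y; rewrite inE => /orP [/eqP -> //|yl Py].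
  exact: hx0.
have Pa : P a.
  case: H => x; rewrite inE => /orP [/eqP -> //|xl Px]; by case: N; exists x.
exists a; split => // y; rewrite inE => /orP [/eqP -> _|yl Py].
  exact: ratio_le_refl.
by case: N; exists y.
Qed.

Lemma exists_min_nat (T : Type) (P : T -> Prop) (f : T -> nat) :
  (exists x, P x) -> exists x, P x /\ forall y, P y -> f x <= f y.
Proof.
case=> x Px.
suff H : forall m x, P x -> f x <= m -> exists x, P x /\ forall y, P y -> f x <= f y.
  exact: (H (f x) x Px).
elim=> [|m IH] z Pz hz.
  by exists z; split => // y _; move: hz; rewrite leqn0 => /eqP ->.
case: (classic (exists2 y, P y & f y < f z)) => [[y Py lt]|N].
  by apply: (IH y Py); rewrite -ltnS (leq_trans lt hz).
exists z; split => // y Py; rewrite leqNgt; apply/negP => lt; apply: N; by exists y.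
Qed.

Lemma exists_optimal n k (A : nat -> nat) p :
  (exists S : 'I_k -> {set 'I_n.+1}, feasible A p S) ->
  exists S : 'I_k -> {set 'I_n.+1}, optimal A p S.
Proof.
case=> S0 F0.
pose P := fun f : {ffun 'I_k -> {set 'I_n.+1}} => feasible A p (fun i => f i).
pose r := fun f : {ffun 'I_k -> {set 'I_n.+1}} => ratio (fun i => f i) A.
have e : forall T : 'I_k -> {set 'I_n.+1}, (fun i => [ffun i => T i] i) = T.
  by move=> T; apply: functional_extensionality => i; rewrite ffunE.
have [f [Pf hf]] : exists f, P f /\ forall y, y \in enum {ffun 'I_k -> {set 'I_n.+1}} -> P y -> ratio_le (r f) (r y).
  apply: exists_min_list; exists [ffun i => S0 i]; first by rewrite mem_enum.
  by rewrite /P e.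
exists (fun i => f i); split => // T FT.
have := hf [ffun i => T i]; rewrite mem_enum /P /r e; exact.
Qed.

Lemma exists_feasible n k (A : nat -> nat) p :
  1 <= p -> p + k <= n + 1 -> exists S : 'I_k -> {set 'I_n.+1}, feasible A p S.
Proof.
move=> p1 pk.
have hv : forall i : 'I_k, val (inord (p + i) : 'I_n.+1) = p + i.
  by move=> i /=; rewrite inordK //; have := ltn_ord i; lia.
exists (fun i => [set inord (p + i)]); split; last split; last split.
- move=> i; rewrite in_set1; apply/negP => /eqP/(congr1 val); rewrite hv /=; lia.
- move=> i j ij; rewrite disjoints1 in_set1; apply/negP => /eqP/(congr1 val).
  rewrite !hv => /eqP; rewrite eqn_add2l => /eqP /val_inj e; by rewrite e eqxx in ij.
- by move=> i /= i0; rewrite maxS1 hv i0 addn0.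
- move=> i /= i0; rewrite maxS1 hv; lia.
Qed.

Lemma sum_D1 n (X : {set 'I_n.+1}) (F : 'I_n.+1 -> nat) e :
  e \in X -> \sum_(j in X) F j = F e + \sum_(j in X :\ e) F j.
Proof.
move=> eX; rewrite (bigD1 e) //; congr (_ + _); apply: eq_bigl => j.
by rewrite in_setD1 andbC.
Qed.

Lemma remove_step n k (A : nat -> nat) p (S : 'I_k -> {set 'I_n.+1}) i0 e m :
  0 < k -> (forall i, 1 <= i <= n -> 0 < A i) -> 1 <= p -> feasible A p S ->
  e \in S i0 -> m \in S i0 -> e != m -> val m = maxS (S i0) ->
  minsum S A <= Sigma (S i0 :\ e) A ->
  feasible A p (upd S i0 (S i0 :\ e)) /\
  ratio_le (ratio (upd S i0 (S i0 :\ e)) A) (ratio S A) /\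
  pot (upd S i0 (S i0 :\ e)) < pot S.
Proof.
move=> k0 Apos p1 F eS mS em mmax hmin.
have FF := F; case: FF => [h0 [hd [h1 h2]]].
have sub : S i0 :\ e \subset S i0 by apply: subD1set.
have mS' : m \in S i0 :\ e by rewrite in_setD1 eq_sym em.
have mx : maxS (S i0 :\ e) = maxS (S i0) by apply: (maxS_sub sub mS').
split; last split.
- apply: upd_feasible => //.
  + by apply: contra (h0 i0); apply: (subsetP sub).
  + move=> i ne; apply: disjointWl sub _; apply: hd; by rewrite eq_sym.
  + by rewrite mx; apply: h1.
  + by rewrite mx; apply: h2.
- apply: ratio_cmp => //; first exact: (feas_minsum_pos k0 Apos p1 F).
  move=> i; rewrite /upd; case: eqP => [_|_]; last first.
    by rewrite minsum_le sigma_le_maxsum.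
  rewrite hmin /=; apply: leq_trans (sigma_le_maxsum S A i0).
  by rewrite [X in _ <= X](@sum_D1 _ _ _ e eS) leq_addl.
- apply: pot_upd; rewrite [X in _ < X](@sum_D1 _ _ _ e eS) -[X in X < _]add0n ltn_add2r.
  rewrite lt0n; apply: contraNneq (h0 i0) => e0.
  by have <- : e = ord0 by apply: val_inj.
Qed.

Lemma swap_step n k (A : nat -> nat) p (S : 'I_k -> {set 'I_n.+1}) i0 j j' :
  0 < k -> (forall i, 1 <= i <= n -> 0 < A i) -> 1 <= p -> feasible A p S ->
  S i0 = [set j] -> (forall i, j' \notin S i) -> p < j' -> val i0 <> 0 ->
  minsum S A <= A j' -> A j' <= A j -> (j' : nat) < j ->
  feasible A p (upd S i0 [set j']) /\
  ratio_le (ratio (upd S i0 [set j']) A) (ratio S A) /\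
  pot (upd S i0 [set j']) < pot S.
Proof.
move=> k0 Apos p1 F Si0 nj' pj' i00 hmin hle hlt.
have FF := F; case: FF => [h0 [hd [h1 h2]]].
split; last split.
- apply: upd_feasible => //.
  + rewrite in_set1; apply/negP => /eqP e; move: pj'; by rewrite -e.
  + by move=> i _; rewrite disjoints1.
  + by move=> _; rewrite maxS1.
- apply: ratio_cmp => //; first exact: (feas_minsum_pos k0 Apos p1 F).
  move=> i; rewrite /upd; case: eqP => [_|_]; last first.
    by rewrite minsum_le sigma_le_maxsum.
  rewrite /Sigma big_set1 hmin /=; apply: leq_trans (sigma_le_maxsum S A i0).
  by rewrite /Sigma Si0 big_set1.
- by apply: pot_upd; rewrite Si0 !big_set1.
Qed.

Lemma card_interval n q d : q + d <= n ->
  #|[set j : 'I_n.+1 | q < j <= q + d]| = d.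
Proof.
elim: d => [|d IH] h.
  apply/eqP; rewrite cards_eq0; apply/eqP/setP => j; rewrite !inE addn0.
  by case: ltnP => //= /leq_gtF ->.
have -> : [set j : 'I_n.+1 | q < j <= q + d.+1] =
          inord (q + d.+1) |: [set j : 'I_n.+1 | q < j <= q + d].
  apply/setP => j; rewrite !inE -(inj_eq val_inj) /= inordK; last by lia.
  case: (ltngtP j (q + d.+1)); lia.
rewrite cardsU1 IH; last by lia.
rewrite inE inordK; last by lia.
have -> : (q < q + d.+1 <= q + d) = false by lia.
by rewrite add1n.
Qed.

Theorem theorem9 (n k : nat) (A : nat -> nat) (p : nat) :
  2 <= k ->
  (forall i, 1 <= i <= n -> 0 < A i) ->
  (forall i j, 1 <= i -> i <= j -> j <= n -> A i <= A j) ->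
  1 <= p -> p + k <= n + 1 ->
  let Q := \sum_(1 <= i < p.+1) A i in
  let q := \max_(1 <= i < n.+1 | A i <= Q) i in
  exists S : 'I_k -> {set 'I_n.+1},
    optimal A p S /\
    (forall i, (forall j, j \in S i -> A j <= Q) -> Sigma (S i) A < 2 * Q) /\
    (forall i, (exists2 j, j \in S i & Q < A j) -> #|S i| = 1) /\
    (let x := #|[set i | (#|S i| == 1) && [exists j in S i, Q < A j]]| in
     \bigcup_(i | (#|S i| == 1) && [exists j in S i, Q < A j]) S i
       = [set j : 'I_n.+1 | q < j <= q + x]).
Proof.
move=> k2 Apos Asort p1 pk Q q.
have k0 : 0 < k by lia.
have pn : p <= n by lia.
pose o0 : 'I_k := Ordinal k0.
have ApQ : A p <= Q by rewrite /Q big_nat_recr //= leq_addl.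
have Q0 : 0 < Q by apply: leq_trans ApQ; apply: Apos; lia.
have qmax : forall j, 1 <= j <= n -> A j <= Q -> j <= q.
  move=> j hj hA; rewrite /q.
  apply: (@leq_bigmax_seq _ _ (fun i => A i <= Q) (fun i => i) j) => //.
  rewrite mem_index_iota; lia.
have qmin : forall j, 1 <= j <= n -> Q < A j -> q < j.
  move=> j hj hA.
  have : q <= j.-1.
    rewrite /q; apply/bigmax_leqP_seq => i; rewrite mem_index_iota => hi hiQ.
    rewrite leqNgt; apply/negP => ji.
    have : A j <= A i by apply: Asort; lia.
    lia.
  lia.
have pq : p <= q by apply: qmax => //; lia.
have feasS0 : forall S : 'I_k -> {set 'I_n.+1}, feasible A p S -> Sigma (S o0) A <= Q.
  move=> S [h0 [_ [h1 _]]]; rewrite /Q; apply: sigma_le_Q => //; move=> j hj.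
  apply/andP; split.
  - rewrite lt0n; apply: contraNneq (h0 o0) => e.
    by have <- : j = ord0 by apply: val_inj.
  - by rewrite -(h1 o0 erefl) le_maxS.
have [S0 optS0] := exists_optimal (exists_feasible A p1 pk).
have [S [optS potS]] := exists_min_nat (@pot n k) (ex_intro _ S0 optS0).
have key : forall S' : 'I_k -> {set 'I_n.+1}, feasible A p S' -> ratio_le (ratio S' A) (ratio S A) -> pot S <= pot S'.
  move=> S' F' r'; apply: potS; split => // T FT.
  exact: ratio_le_trans r' (optS.2 T FT).
have FS := optS.1.
have FS' := FS; case: FS' => [h0 [hd [h1 h2]]].
have minQ : minsum S A <= Q := leq_trans (minsum_le S A o0) (feasS0 S FS).
have maxpos : forall i, 0 < maxS (S i).
  move=> i; case: ((i : nat) =P 0) => [e|ne]; first by rewrite h1.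
  exact: leq_ltn_trans (leq0n p) (h2 i ne).
have maxatt : forall i, exists2 m : 'I_n.+1, m \in S i & (m : nat) = maxS (S i).
  by move=> i; have [m mS e] := maxS_att (maxpos i); exists m.
have jb : forall i (j : 'I_n.+1), j \in S i -> 1 <= j <= n.
  move=> i j jS; apply/andP; split; last by rewrite -ltnS ltn_ord.
  rewrite lt0n; apply: contraNneq (h0 i) => e.
  by have <- : j = ord0 by apply: val_inj.
have sD1 : forall (X : {set 'I_n.+1}) e, e \in X -> Sigma X A = A e + Sigma (X :\ e) A.
  by move=> X e eX; rewrite /Sigma (@sum_D1 _ _ (fun j => A j) e eX).
have P2 : forall i, (exists2 j, j \in S i & Q < A j) -> #|S i| = 1.
  move=> i [j jS hj]; have [m mS mmax] := maxatt i.
  have Amj : A j <= A m.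
    have := jb _ _ jS; have := jb _ _ mS; have := le_maxS jS; rewrite -mmax.
    move=> h3 h4 h5; apply: Asort; lia.
  case: (classic (exists2 e, e \in S i & e != m)) => [[e eS em]|N].
    have hmin : minsum S A <= Sigma (S i :\ e) A.
      have mS' : m \in S i :\ e by rewrite in_setD1 eq_sym em.
      rewrite (sD1 _ _ mS'); lia.
    have [F' [r' p']] := remove_step k0 Apos p1 FS eS mS em mmax hmin.
    have := key _ F' r'; lia.
  apply/eqP/cards1P; exists m; apply/setP => x; rewrite in_set1.
  apply/idP/eqP => [xS|->//].
  case: (eqVneq x m) => // xm; case: N; by exists x.
have P1 : forall i, (forall j, j \in S i -> A j <= Q) -> Sigma (S i) A < 2 * Q.
  move=> i hall; rewrite ltnNge; apply/negP => h2Q.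
  have [m mS mmax] := maxatt i.
  case: (classic (exists2 e, e \in S i & e != m)) => [[e eS em]|N].
    have hmin : minsum S A <= Sigma (S i :\ e) A.
      move: h2Q; rewrite (sD1 _ _ eS); have := hall e eS; lia.
    have [F' [r' p']] := remove_step k0 Apos p1 FS eS mS em mmax hmin.
    have := key _ F' r'; lia.
  have e0 : S i :\ m = set0.
    apply/setP => x; rewrite in_setD1 in_set0; case: (eqVneq x m) => //= xm.
    by apply/negP => xS; case: N; exists x.
  move: h2Q; rewrite (sD1 _ _ mS) e0 /Sigma big_set0; have := hall m mS; lia.
exists S; split => //; split => //; split => //.
cbv zeta.
set c := fun i => (#|S i| == 1) && [exists j in S i, Q < A j].
have memU : forall j, (j \in \bigcup_(i | c i) S i) = [exists i, j \in S i] && (Q < A j).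
  move=> j; apply/bigcupP/andP => [[i /andP[_ /existsP [y /andP [yS hy]]] jS]|[/existsP [i jS] hj]].
    split; first by apply/existsP; exists i.
    have /cards1P [z ez] : #|S i| == 1 by apply/eqP; apply: P2; exists y.
    by move: jS yS hy; rewrite ez !in_set1 => /eqP -> /eqP ->.
  exists i => //; apply/andP; split; first by apply/eqP; apply: P2; exists j.
  by apply/existsP; exists j; rewrite jS.
set U := \bigcup_(i | c i) S i.
have Ugt : forall j : 'I_n.+1, j \in U -> q < j.
  move=> j; rewrite memU => /andP [/existsP [i jS] hj]; exact: qmin (jb _ _ jS) hj.
have Udown : forall (j j' : 'I_n.+1), j \in U -> q < j' -> (j' : nat) < j -> j' \in U.
  move=> j j' jU qj' j'j; apply: contraT => nU.
  have hj' : 1 <= j' <= n by apply/andP; split; [lia| rewrite -ltnS ltn_ord].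
  have Aj' : Q < A j' by rewrite ltnNge; apply/negP => /(qmax _ hj'); lia.
  have nj' : forall i, j' \notin S i.
    move=> i; apply/negP => j'S; move: nU; rewrite memU Aj' andbT.
    by move/existsP; apply; exists i.
  move: (jU); rewrite /U => /bigcupP [i0 /andP [ci0 _] jS].
  have /cards1P [z ez] := ci0.
  have Si0 : S i0 = [set j] by move: jS; rewrite ez in_set1 => /eqP ->.
  have hjU := Ugt _ jU.
  have i00 : val i0 <> 0.
    by move=> /h1; rewrite Si0 maxS1; lia.
  have hjn : (j : nat) <= n by rewrite -ltnS ltn_ord.
  have Ale : A j' <= A j by apply: Asort; lia.
  have [F' [r' p']] := swap_step k0 Apos p1 FS Si0 nj' (leq_ltn_trans pq qj') i00
    (leq_trans minQ (ltnW Aj')) Ale j'j.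
  have := key _ F' r'; lia.
set B := finset c.
pose f := fun i => odflt ord0 [pick j in S i].
have fS : forall i, i \in B -> S i = [set f i].
  move=> i; rewrite inE => /andP [/cards1P [z ez] _]; rewrite /f ez.
  case: pickP => [y|none] /=; first by rewrite in_set1 => /eqP ->.
  by have := none z; rewrite in_set1 eqxx.
have UB : U = f @: B.
  apply/setP => j; apply/bigcupP/imsetP => [[i ci jS]|[i iB ->]].
    have iB : i \in B by rewrite inE.
    by exists i => //; move: jS; rewrite (fS i iB) in_set1 => /eqP.
  exists i; first by move: iB; rewrite inE.
  by rewrite (fS i iB) in_set1.
have cardU : #|U| = #|B|.
  rewrite UB; apply: card_in_imset => i i' iB i'B e.
  apply/eqP; apply: contraT => ne.
  have fi : f i \in S i by rewrite (fS i iB) in_set1.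
  have := disjointFr (hd i i' ne) fi.
  by rewrite (fS i' i'B) e in_set1 eqxx.
rewrite -cardU.
case: (set_0Vmem U) => [U0|[j0 j0U]].
  rewrite U0 cards0 addn0; apply/setP => j; rewrite in_set0 inE.
  symmetry; apply/negbTE; apply/negP => /andP []; lia.
have U0 : 0 < #|U| by apply/card_gt0P; exists j0.
have [m mU mmax] := @eq_bigmax_cond _ (mem U) (fun j => val j) U0.
have mle : forall j, j \in U -> (j : nat) <= m.
  move=> j jU; have := @bigop.leq_bigmax_cond _ (mem U) (fun j => val j) j jU.
  by rewrite mmax.
have qm := Ugt _ mU.
have mn : (m : nat) <= n by rewrite -ltnS ltn_ord.
have eU : U = [set j : 'I_n.+1 | q < j <= q + (m - q)].
  apply/setP => j; rewrite inE; apply/idP/andP => [jU|[qj jm]].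
    split; [exact: Ugt | have := mle j jU; lia].
  case: (ltngtP j m) => [jm'|mj|/val_inj->//]; [exact: Udown mU qj jm' | lia].
have cU : #|U| = m - q by rewrite eU card_interval //; lia.
by rewrite cU; exact: eU.
Qed.
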